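(* For any choice of eigenbases $B_g$ ($g\in G$) used to define $\Upsilon$, the composite $\Phi^*\Upsilon:C^p\to C^p$ is the identity map for every $p\ge0$.
   Context: Let $G$ be a finite group acting linearly on a complex vector space $V$ of dimension $n$, $v\mapsto{}^gv$, and on $V^*$, $S(V)$, $\bigwedge V^*$ accordingly. $S(V)\#G$ is $S(V)\otimes\mathbb C G$ with product $(a\otimes g)(b\otimes h)=a\,{}^gb\otimes gh$. Let $C^p=S(V)\otimes\bigwedge^pV^*\otimes\mathbb C[G]$, identified with $\operatorname{Hom}_{\mathbb C}(\bigwedge^pV,S(V)\#G)$ (for $f\otimes\omega\otimes g$, $u\mapsto \omega(u)f\otimes g$). $\Phi^*:\operatorname{Hom}_{\mathbb C}(S(V)^{\otimes p},S(V)\#G)\to C^p$ is given by $(\Phi^*F)(u_1\wedge\cdots\wedge u_p)=\sum_{\pi\in\mathrm{Sym}_p}\operatorname{sgn}(\pi)F(u_{\pi(1)}\otimes\cdots\otimes u_{\pi(p)})$ for $u_i\in V$. The map $\Upsilon:C^p\to\operatorname{Hom}_{\mathbb C}(S(V)^{\otimes p},S(V)\#G)$ is defined as follows. For each $g\in G$ fix a basis $B_g=\{v_1,\dots,v_n\}$ of $V$ of eigenvectors of $g$, ${}^gv_i=\epsilon_iv_i$, with dual basis $v_1^*,\dots,v_n^*$; let $s_i\in GL(V)$ be the diagonal map (in this basis) $v_i\mapsto\epsilon_iv_i$, $v_j\mapsto v_j$ ($j\ne i$), so $g=s_1\cdots s_n$. Let $\partial_i:S(V)\to S(V)$ be the ordinary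 partial derivative $\partial/\partial v_i$ if $\epsilon_i=1$ and $\partial_i(f)=(f-{}^{s_i}f)/(v_i-{}^{s_i}v_i)$ if $\epsilon_i\ne1$. For $\alpha=f_g\otimes v_{j_1}^*\wedge\cdots\wedge v_{j_p}^*\otimes g$ with $j_1<\cdots<j_p$, set $\Upsilon(\alpha)(f_1\otimes\cdots\otimes f_p)=\Big(\prod_{k=1}^p{}^{s_1s_2\cdots s_{j_k-1}}(\partial_{j_k}f_k)\Big)f_g\otimes g$, and extend linearly. *)

(* Defs.v *)
From HB Require Import structures.
From mathcomp Require Import all_boot all_order all_fingroup all_algebra.
From mathcomp Require Import mxrepresentation.
From Stdlib Require Import ClassicalEpsilon.
Set Implicit Arguments.
Unset Strict Implicit.
Unset Printing Implicit Defensive.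
Import GRing.Theory.
Local Open Scope ring_scope.

Section Defs.
Variable F : numClosedFieldType.

(* S(V) for V = F^n (column vectors): polynomial ring F[x_1,...,x_n],
   built as iterated univariate polynomials; x_i = i-th standard basis vector. *)
Fixpoint MP (n : nat) : idomainType :=
  if n is n'.+1 then ({poly MP n'} : idomainType) else (F : idomainType).

Fixpoint cst (n : nat) : F -> MP n :=
  match n return F -> MP n with
  | 0 => fun a => a
  | n'.+1 => fun a => (cst n' a)%:P
  end.

Fixpoint var (n : nat) : 'I_n -> MP n :=
  match n return 'I_n -> MP n with
  | 0 => fun _ => 0
  | n'.+1 => fun i =>
      match unlift ord_max i with None => 'X | Some j => (var j)%:P end
  end.

Fixpoint ev (n m : nat) : ('I_n -> MP m) -> MP n -> MP m :=
  match n return ('I_n -> MP m) -> MP n -> MP m with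
  | 0 => fun _ a => cst m a
  | n'.+1 => fun s p =>
      (map_poly (@ev n' m (fun j => s (lift ord_max j))) p).[s ord_max]
  end.

Fixpoint pdx (n : nat) : 'I_n -> MP n -> MP n :=
  match n return 'I_n -> MP n -> MP n with
  | 0 => fun _ f => f
  | n'.+1 => fun i p =>
      match unlift ord_max i with
      | None => p^`()
      | Some j => map_poly (@pdx n' j) p
      end
  end.

Variable n : nat.

Definition embV (v : 'cV[F]_n) : MP n := \sum_(k < n) cst n (v k 0) * var k.

(* the algebra automorphism of S(V) induced by M in GL(V) (v |-> M *m v) *)
Definition act (M : 'M[F]_n) (f : MP n) : MP n :=
  @ev n n (fun k => embV (col k M)) f.

(* basis B (columns v_1..v_n) with eigenvalues e : s_i := diagonal map
   v_i |-> e_i v_i, v_j |-> v_j (j <> i) *)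
Definition smat (B : 'M[F]_n) (e : 'I_n -> F) (i : 'I_n) : 'M[F]_n :=
  B *m diag_mx (\row_l (if l == i then e i else 1)) *m invmx B.

(* ordinary partial derivative d/dv_i in the coordinates of the basis B *)
Definition pderivB (B : 'M[F]_n) (i : 'I_n) (f : MP n) : MP n :=
  act B (pdx i (act (invmx B) f)).

(* (f - ^S f) / (v - ^S v), the quotient in the domain S(V) *)
Definition ddiff (S : 'M[F]_n) (v : 'cV[F]_n) (f : MP n) : MP n :=
  epsilon (inhabits 0)
    (fun h => (embV v - act S (embV v)) * h = f - act S f).

Definition partialB (B : 'M[F]_n) (e : 'I_n -> F) (i : 'I_n) (f : MP n) : MP n :=
  if e i == 1 then pderivB B i f else ddiff (smat B e i) (col i B) f.

(* ^{s_1 s_2 ... s_{j-1}} f  (0-based: s_0 ... s_{j-1} with index < j) *)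
Definition spre (B : 'M[F]_n) (e : 'I_n -> F) (j : 'I_n) (f : MP n) : MP n :=
  foldr (fun l h => act (smat B e l) h) f (filter (fun l : 'I_n => (l < j)%N) (enum 'I_n)).

Variable gT : finGroupType.

Definition incr (p : nat) (J : {ffun 'I_p -> 'I_n}) : bool :=
  [forall k : 'I_p, forall l : 'I_p, (k < l)%N ==> (J k < J l)%N].

(* An element of C^p = Hom(wedge^p V, S(V)#G) is represented by the
   alternating multilinear map (u_1,...,u_p) |-> (g |-> component at g). *)
Definition multilinear (p : nat) (a : ('I_p -> 'cV[F]_n) -> gT -> MP n) :=
  forall (k : 'I_p) (u : 'I_p -> 'cV[F]_n) (x y : 'cV[F]_n) (c : F) (g : gT),
    a (fun l => if l == k then c *: x + y else u l) g =
    cst n c * a (fun l => if l == k then x else u l) g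
    + a (fun l => if l == k then y else u l) g.

Definition alternating (p : nat) (a : ('I_p -> 'cV[F]_n) -> gT -> MP n) :=
  forall (u : 'I_p -> 'cV[F]_n) (i j : 'I_p), i != j -> u i = u j ->
    forall g : gT, a u g = 0.

(* Upsilon : C^p -> Hom(S(V)^{(x)p}, S(V)#G); an element of the target is
   represented by its values on pure tensors f_1 (x) ... (x) f_p, with values
   in S(V)#G = S(V) (x) CG given as g |-> S(V)-component at g.
   alpha = sum_{g,J} f_{g,J} (x) v_J^* (x) g with
   f_{g,J} = alpha(v_{j_1} /\ ... /\ v_{j_p}) component at g. *)
Definition Upsilon (B : gT -> 'M[F]_n) (e : gT -> 'I_n -> F) (p : nat)
  (alpha : ('I_p -> 'cV[F]_n) -> gT -> MP n) : ('I_p -> MP n) -> gT -> MP n :=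
  fun f g =>
    \sum_(J : {ffun 'I_p -> 'I_n} | incr J)
      (\prod_(k < p) spre (B g) (e g) (J k) (partialB (B g) (e g) (J k) (f k)))
      * alpha (fun k => col (J k) (B g)) g.

Definition PhiStar (p : nat) (Fm : ('I_p -> MP n) -> gT -> MP n)
  : ('I_p -> 'cV[F]_n) -> gT -> MP n :=
  fun u g => \sum_(s : 'S_p) (-1) ^+ s * Fm (fun k => embV (u (s k))) g.

End Defs.

(* Main.v *)
Require Import Defs.
From HB Require Import structures.
From mathcomp Require Import all_boot all_order all_fingroup all_algebra.
From mathcomp Require Import mxrepresentation.
From Stdlib Require Import ClassicalEpsilon FunctionalExtensionality.
Set Implicit Arguments.
Unset Strict Implicit.
Unset Printing Implicit Defensive.
Import GRing.Theory.
Local Open Scope ring_scope.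

Section Poly.
Variable F : numClosedFieldType.

Lemma cstD n a b : @cst F n (a + b) = @cst F n a + @cst F n b.
Proof. elim: n => [|n IH] //=; by rewrite IH polyCD. Qed.
Lemma cstM n a b : @cst F n (a * b) = @cst F n a * @cst F n b.
Proof. elim: n => [|n IH] //=; by rewrite IH polyCM. Qed.
Lemma cst0 n : @cst F n 0 = 0.
Proof. elim: n => [|n IH] //=; by rewrite IH. Qed.
Lemma cst1 n : @cst F n 1 = 1.
Proof. elim: n => [|n IH] //=; by rewrite IH. Qed.
Lemma cstN n a : @cst F n (- a) = - @cst F n a.
Proof. by apply/eqP; rewrite -subr_eq0 opprK -cstD addNr cst0. Qed.
Lemma cstB n a b : @cst F n (a - b) = @cst F n a - @cst F n b.
Proof. by rewrite cstD cstN. Qed.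
Lemma cst_inj n : injective (@cst F n).
Proof. elim: n => [|n IH] //= a b H; apply: IH; exact: polyC_inj H. Qed.
Lemma cst_sum n (I : finType) (P : pred I) (f : I -> F) :
  @cst F n (\sum_(i | P i) f i) = \sum_(i | P i) @cst F n (f i).
Proof. exact: (big_morph _ (@cstD n) (@cst0 n)). Qed.
Lemma cst_prod n (I : finType) (P : pred I) (f : I -> F) :
  @cst F n (\prod_(i | P i) f i) = \prod_(i | P i) @cst F n (f i).
Proof. exact: (big_morph _ (@cstM n) (@cst1 n)). Qed.

Lemma map_polyD0 (R S : nzSemiRingType) (f : R -> S) p q :
  f 0 = 0 -> (forall x y, f (x + y) = f x + f y) ->
  map_poly f (p + q) = map_poly f p + map_poly f q.
Proof.
move=> f0 fD; apply/polyP => i.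
by rewrite coefD !coef_map_id0 // coefD fD.
Qed.
Lemma map_polyC0 (R S : nzSemiRingType) (f : R -> S) c :
  f 0 = 0 -> map_poly f c%:P = (f c)%:P.
Proof.
move=> f0; apply/polyP => i; rewrite coef_map_id0 // !coefC.
by case: (i == 0)%N.
Qed.
Lemma map_polyCX0 (R S : nzSemiRingType) (f : R -> S) c :
  f 0 = 0 -> map_poly f (c%:P * 'X) = (f c)%:P * 'X.
Proof.
move=> f0; apply/polyP => i; rewrite coef_map_id0 // !coefCM !coefX.
by case: (i == 1)%N; rewrite ?mulr1 ?mulr0.
Qed.

Lemma ev0 n m s : @ev F n m s 0 = 0.
Proof. case: n s => [|n] s /=; first exact: cst0. by rewrite map_poly0 horner0. Qed.

Lemma evD n m s p q : @ev F n m s (p + q) = ev s p + ev s q.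
Proof.
elim: n s p q => [|n IH] s p q /=; first exact: cstD.
rewrite map_polyD0 ?hornerD //; exact: ev0.
Qed.

Lemma ev_cst n m s a : @ev F n m s (@cst F n a) = @cst F m a.
Proof.
elim: n s => [|n IH] s //=.
by rewrite map_polyC0 ?hornerC ?IH //; apply: ev0.
Qed.

Lemma ev_cstvar n m s a k : @ev F n m s (@cst F n a * var F k) = @cst F m a * s k.
Proof.
elim: n s k => [|n IH] s k; first by case: k.
rewrite /=; case: (unliftP ord_max k) => [j ->|->].
  rewrite -polyCM map_polyC0 ?hornerC ?IH //; exact: ev0.
- rewrite map_polyCX0; last exact: ev0.
  by rewrite hornerMX hornerC ev_cst.
Qed.

Lemma pdx0 n i : @pdx F n i 0 = 0.
Proof.
case: n i => [|n] i //=; case: (unlift ord_max i) => [j|].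
  by rewrite map_poly0. by rewrite deriv0.
Qed.

Lemma pdxD n i p q : @pdx F n i (p + q) = pdx i p + pdx i q.
Proof.
elim: n i p q => [|n IH] i p q; first by case: i.
rewrite /=; case: (unlift ord_max i) => [j|]; last exact: derivD.
by apply: map_polyD0 => //; apply: pdx0.
Qed.

Lemma pdx_cst n i a : @pdx F n i (@cst F n a) = 0.
Proof.
elim: n i => [|n IH] i; first by case: i.
rewrite /=; case: (unlift ord_max i) => [j|]; last exact: derivC.
by rewrite map_polyC0 ?IH //; apply: pdx0.
Qed.

Lemma pdx_cstvar n i a k :
  @pdx F n i (@cst F n a * var F k) = @cst F n (if k == i then a else 0).
Proof.
elim: n i k => [|n IH] i k; first by case: i.
rewrite /=; case: (unliftP ord_max k) => [j ->|->].
- rewrite /= ?liftK -polyCM; case: (unliftP ord_max i) => [j' ->|->].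
  + rewrite /= ?liftK map_polyC0 ?IH; last exact: pdx0.
    by rewrite (inj_eq (@lift_inj _ ord_max)).
  + rewrite /= ?unlift_none derivC.
    by rewrite eq_sym (negbTE (neq_lift _ _)) cst0.
- rewrite /= ?unlift_none; case: (unliftP ord_max i) => [j' ->|->].
  + rewrite /= ?liftK map_polyCX0 ?pdx_cst ?mul0r; last exact: pdx0.
    by rewrite (negbTE (neq_lift _ _)) cst0.
    by rewrite eqxx mul_polyC derivZ derivX -mul_polyC mulr1.
Qed.

Variable n : nat.
Notation MPn := (MP F n).
Notation cstn := (@cst F n).

Lemma embVD (v w : 'cV[F]_n) : embV (v + w) = embV v + embV w.
Proof.
rewrite /embV -big_split /=; apply: eq_bigr => k _.
by rewrite mxE cstD mulrDl.
Qed.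
Lemma embVZ c (v : 'cV[F]_n) : embV (c *: v) = cstn c * embV v.
Proof.
rewrite /embV mulr_sumr; apply: eq_bigr => k _.
by rewrite mxE cstM mulrA.
Qed.
Lemma embV0 : embV (0 : 'cV[F]_n) = 0.
Proof. by rewrite -(scale0r 0) embVZ cst0 mul0r. Qed.
Lemma embVN (v : 'cV[F]_n) : embV (- v) = - embV v.
Proof. by rewrite -scaleN1r embVZ cstN cst1 mulN1r. Qed.
Lemma embVB (v w : 'cV[F]_n) : embV (v - w) = embV v - embV w.
Proof. by rewrite embVD embVN. Qed.
Lemma embV_sum (I : finType) (P : pred I) (f : I -> 'cV[F]_n) :
  embV (\sum_(i | P i) f i) = \sum_(i | P i) embV (f i).
Proof. exact: (big_morph _ embVD embV0). Qed.

Lemma ev_sum m s (I : finType) (P : pred I) (f : I -> MPn) :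
  @ev F n m s (\sum_(i | P i) f i) = \sum_(i | P i) ev s (f i).
Proof. exact: (big_morph _ (@evD n m s) (@ev0 n m s)). Qed.

Lemma mulmx_colsum (M : 'M[F]_n) (v : 'cV[F]_n) :
  M *m v = \sum_k v k 0 *: col k M.
Proof.
apply/matrixP => i j; rewrite [j]ord1 !mxE summxE; apply: eq_bigr => k _.
by rewrite !mxE mulrC.
Qed.

Lemma act_cst M a : Defs.act M (cstn a) = cstn a.
Proof. exact: ev_cst. Qed.

Lemma act_embV M (v : 'cV[F]_n) : Defs.act M (embV v) = embV (M *m v).
Proof.
rewrite /Defs.act {1}/embV ev_sum mulmx_colsum embV_sum; apply: eq_bigr => k _.
by rewrite ev_cstvar embVZ.
Qed.

Lemma pdx_sum i (I : finType) (P : pred I) (f : I -> MPn) :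
  pdx i (\sum_(j | P j) f j) = \sum_(j | P j) pdx i (f j).
Proof. exact: (big_morph _ (@pdxD n i) (@pdx0 n i)). Qed.

Lemma pdx_embV i (v : 'cV[F]_n) : pdx i (embV v) = cstn (v i 0).
Proof.
rewrite /embV pdx_sum (eq_bigr (fun k => cstn (if k == i then v k 0 else 0)));
  last by move=> k _; rewrite pdx_cstvar.
by rewrite -cst_sum -big_mkcond /= big_pred1_eq.
Qed.

Lemma embV_eq0 (v : 'cV[F]_n) : embV v = 0 -> v = 0.
Proof.
move=> H; apply/matrixP => i j; rewrite [j]ord1 mxE; apply: (@cst_inj n).
by rewrite -pdx_embV H pdx0 cst0.
Qed.


Section Partial.
Variables (B : 'M[F]_n) (e : 'I_n -> F) (i : 'I_n).
Hypothesis HB : B \in unitmx.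

Let d' : 'rV[F]_n := \row_l (if l == i then 1 - e i else 0).
Let y : 'cV[F]_n := B *m col i (diag_mx d').

Lemma diag_compl :
  1%:M - diag_mx (\row_l (if l == i then e i else 1)) = diag_mx d'.
Proof.
apply/matrixP => r k; rewrite !mxE.
case: (eqVneq r k) => [->|_]; last by rewrite !mulr0n subr0.
by rewrite !mulr1n; case: (k == i); rewrite ?subrr.
Qed.

Lemma smat_key (w : 'cV[F]_n) :
  w - smat B e i *m w = (invmx B *m w) i 0 *: y.
Proof.
rewrite /smat /y -!mulmxA -{1}(mulKVmx HB w) -mulmxBr.
rewrite -[X in X - _]mul1mx -mulmxBl diag_compl scalemxAr; congr (_ *m _).
rewrite mul_diag_mx; apply/matrixP => r k; rewrite [k]ord1 !mxE.
case: (eqVneq r i) => [->|ne]; first by rewrite mulr1n mulrC.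
by rewrite mulr0n mul0r mulr0.
Qed.

Lemma smat_keyv : col i B - smat B e i *m col i B = y.
Proof.
rewrite smat_key {1}colE mulKmx // mxE !eqxx /= scale1r //.
Qed.

Hypothesis He : e i != 1.

Lemma y_neq0 : y != 0.
Proof.
apply/eqP => H.
have : col i (diag_mx d') = 0 by rewrite -(mulKmx HB (col i (diag_mx d'))) -/y H mulmx0.
move/matrixP => /(_ i 0); rewrite !mxE eqxx mulr1n.
by move/eqP; rewrite subr_eq0 eq_sym (negbTE He).
Qed.

Lemma ddiff_embV (u : 'cV[F]_n) :
  ddiff (smat B e i) (col i B) (embV u) = cstn ((invmx B *m u) i 0).
Proof.
rewrite /ddiff; set P := fun h => _.
have HP : P (cstn ((invmx B *m u) i 0)).
  by rewrite /P !act_embV -!embVB smat_keyv smat_key embVZ mulrC.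
have := epsilon_spec (inhabits 0) P (ex_intro _ _ HP).
rewrite /P => H2; move: HP; rewrite /P => HP.
have nz : embV (col i B) - Defs.act (smat B e i) (embV (col i B)) != 0.
  rewrite act_embV -embVB smat_keyv; apply/eqP => /embV_eq0 /eqP; exact/negP/y_neq0.
by apply: (GRing.mulfI nz); rewrite H2 HP.
Qed.
End Partial.

Lemma partialB_embV (B : 'M[F]_n) e i (u : 'cV[F]_n) : B \in unitmx ->
  partialB B e i (embV u) = cstn ((invmx B *m u) i 0).
Proof.
move=> HB; rewrite /partialB; case: ifP => He.
  by rewrite /pderivB act_embV pdx_embV act_cst.
by apply: ddiff_embV => //; rewrite He.
Qed.

Lemma spre_cst B e j a : spre B e j (cstn a) = cstn a.
Proof.
rewrite /spre; elim: (filter _ _) => [|l s IH] //=.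
by rewrite IH act_cst.
Qed.


Section Sort.
Variable p : nat.
Definition ordle : rel 'I_n := fun x y => (x <= y)%N.
Definition ordlt : rel 'I_n := fun x y => (x < y)%N.
Definition tJ (J : {ffun 'I_p -> 'I_n}) := sort ordle (codom J).
Definition srt (J : {ffun 'I_p -> 'I_n}) : {ffun 'I_p -> 'I_n} :=
  [ffun k => nth (J k) (tJ J) k].
Definition comp (J0 : {ffun 'I_p -> 'I_n}) (s : 'S_p) : {ffun 'I_p -> 'I_n} :=
  [ffun k => J0 (s k)].

Lemma ordle_total : total ordle.
Proof. by move=> x y; apply: leq_total. Qed.
Lemma ordle_trans : transitive ordle.
Proof. by move=> x y z; apply: leq_trans. Qed.
Lemma ordle_anti : antisymmetric ordle.
Proof. by move=> x y H; apply: val_inj; apply: anti_leq. Qed.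
Lemma ordlt_trans : transitive ordlt.
Proof. by move=> x y z; apply: ltn_trans. Qed.

Lemma size_tJ J : size (tJ J) = p.
Proof. by rewrite /tJ size_sort size_codom card_ord. Qed.

Lemma incr_inj (J0 : {ffun 'I_p -> 'I_n}) : incr J0 -> injective J0.
Proof.
move=> /forallP H k l e; case: (ltngtP k l) => [kl|lk|/val_inj //].
  by have := implyP (forallP (H k) l) kl; rewrite e ltnn.
by have := implyP (forallP (H l) k) lk; rewrite e ltnn.
Qed.

Lemma srt_incr (J : {ffun 'I_p -> 'I_n}) : injectiveb J -> incr (srt J).
Proof.
move=> /injectiveP Jinj.
have ut : uniq (tJ J).
  by rewrite /tJ sort_uniq codomE map_inj_uniq // enum_uniq.
have st : sorted ordlt (tJ J).
  have sl : sorted leq (map val (tJ J)).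
    rewrite sorted_map; exact: (sort_sorted ordle_total).
  have : sorted ltn (map val (tJ J)).
    by rewrite ltn_sorted_uniq_leq sl (map_inj_uniq val_inj) ut.
  by rewrite sorted_map.
apply/forallP => k; apply/forallP => l; apply/implyP => kl.
rewrite !ffunE (set_nth_default (J k) (J l)) ?size_tJ //.
by apply: (sorted_ltn_nth ordlt_trans) => //; rewrite inE size_tJ.
Qed.

Lemma sorted_codom (J0 : {ffun 'I_p -> 'I_n}) : incr J0 -> sorted ordle (codom J0).
Proof.
move=> /forallP H; rewrite codomE sorted_map.
have : sorted (relpre val ltn) (enum 'I_p) by rewrite -sorted_map val_enum_ord iota_ltn_sorted.
apply: sub_sorted => k l kl /=; rewrite /ordle; apply: ltnW.
exact: (implyP (forallP (H k) l) kl).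
Qed.

Lemma srt_comp (J0 : {ffun 'I_p -> 'I_n}) s : incr J0 -> srt (comp J0 s) = J0.
Proof.
move=> iJ0.
have pe : perm_eq (codom (comp J0 s)) (codom J0).
  have -> : codom (comp J0 s) = map J0 (map s (enum 'I_p)).
    by rewrite codomE -(map_comp J0 s); apply: eq_map => k /=; rewrite ffunE.
  rewrite codomE; apply: perm_map; apply: uniq_perm.
  - by rewrite map_inj_uniq ?enum_uniq //; exact: perm_inj.
  - exact: enum_uniq.
  - move=> k; rewrite mem_enum inE; apply/mapP; exists ((s^-1)%g k); last by rewrite permKV.
    by rewrite mem_enum.
have tE : tJ (comp J0 s) = codom J0.
  rewrite /tJ (perm_sortP ordle_total ordle_trans ordle_anti _ _ pe).
  exact: (sorted_sort ordle_trans (sorted_codom iJ0)).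
apply/ffunP => k; rewrite ffunE tE codomE (nth_map k) ?size_enum_ord //.
by congr (J0 _); apply: val_inj; rewrite /= nth_enum_ord.
Qed.

Lemma srt_surj (J : {ffun 'I_p -> 'I_n}) : injectiveb J -> exists s, comp (srt J) s = J.
Proof.
move=> /injectiveP Jinj.
have memt k : J k \in tJ J by rewrite /tJ mem_sort codom_f.
  have ltf k : (index (J k) (tJ J) < p)%N by rewrite -[X in (_ < X)%N](size_tJ J) index_mem.
pose f k : 'I_p := Ordinal (ltf k).
have ff k : srt J (f k) = J k.
  rewrite ffunE (set_nth_default (J k)) ?size_tJ //.
  exact: nth_index.
have finj : injective f by move=> k l e; apply: Jinj; rewrite -!ff e.
exists (perm finj); apply/ffunP => k; rewrite ffunE permE; exact: ff.
Qed.

Lemma comp_inj (J0 : {ffun 'I_p -> 'I_n}) s : incr J0 -> injectiveb (comp J0 s).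
Proof.
move=> iJ; apply/injectiveP => k l; rewrite !ffunE => /(incr_inj iJ); exact: perm_inj.
Qed.

Lemma sum_orbit (R : nmodType) (T : {ffun 'I_p -> 'I_n} -> R) (J0 : {ffun 'I_p -> 'I_n}) : incr J0 ->
  \sum_(s : 'S_p) T (comp J0 s) = \sum_(J : {ffun 'I_p -> 'I_n} | injectiveb J && (srt J == J0)) T J.
Proof.
move=> iJ.
have cinj s1 s2 : comp J0 s1 = comp J0 s2 -> s1 = s2.
  move=> e; apply/permP => k; have := congr1 (fun J : {ffun 'I_p -> 'I_n} => J k) e.
  by rewrite !ffunE => /(incr_inj iJ).
pose h' J := odflt 1%g [pick s | comp J0 s == J].
symmetry; rewrite (reindex_onto (comp J0) h').
  apply: eq_bigl => s; rewrite comp_inj // srt_comp // eqxx /=.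
  rewrite /h'; case: pickP => [s' /eqP /cinj -> //|/(_ s)]; by rewrite eqxx.
move=> J /andP [ij /eqP sJ]; rewrite /h'; case: pickP => [s' /eqP //|none].
have [s e] := srt_surj ij; rewrite sJ in e.
by have := none s; rewrite e eqxx.
Qed.

End Sort.

Section Multi.
Variable p : nat.
Variable a : ('I_p -> 'cV[F]_n) -> MPn.
Hypothesis Hml : forall (k : 'I_p) (u : 'I_p -> 'cV[F]_n) (x y : 'cV[F]_n) (c : F),
    a (fun l => if l == k then c *: x + y else u l) =
    cstn c * a (fun l => if l == k then x else u l)
    + a (fun l => if l == k then y else u l).
Hypothesis Halt : forall (u : 'I_p -> 'cV[F]_n) (i j : 'I_p), i != j -> u i = u j -> a u = 0.

Definition upd (u : 'I_p -> 'cV[F]_n) k x := fun l => if l == k then x else u l.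

Lemma M0 u k : a (upd u k 0) = 0.
Proof.
have := Hml k u 0 0 1; rewrite scaler0 addr0 cst1 mul1r => H.
by apply/eqP; rewrite -(addrI _ (esym (etrans (addr0 _) H))) /upd.
Qed.

Lemma MD u k x y : a (upd u k (x + y)) = a (upd u k x) + a (upd u k y).
Proof. by have := Hml k u x y 1; rewrite scale1r cst1 mul1r. Qed.

Lemma Msum u k (I : finType) (P : pred I) (c : I -> F) (x : I -> 'cV[F]_n) :
  a (upd u k (\sum_(j | P j) c j *: x j)) = \sum_(j | P j) cstn (c j) * a (upd u k (x j)).
Proof.
apply: (big_rec2 (fun y1 y2 => a (upd u k y1) = y2)); first exact: M0.
by move=> j y1 y2 _ <-; apply: Hml.
Qed.

Lemma upd_id u k : upd u k (u k) = u.
Proof. by apply: functional_extensionality => l; rewrite /upd; case: eqP => // ->. Qed.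

Lemma upd_comm u i j x y : i != j -> upd (upd u j y) i x = upd (upd u i x) j y.
Proof.
move=> ne; apply: functional_extensionality => l; rewrite /upd.
case: (eqVneq l i) => [->|]; last by [].
by rewrite (negbTE ne).
Qed.

Lemma Mswap w i j : i != j -> a (fun k => w (tperm i j k)) = - a w.
Proof.
move=> ne.
pose m X Y := a (upd (upd w j Y) i X).
have mD1 X1 X2 Y : m (X1 + X2) Y = m X1 Y + m X2 Y by apply: MD.
have mD2 X Y1 Y2 : m X (Y1 + Y2) = m X Y1 + m X Y2.
  by rewrite /m !(upd_comm _ _ _ ne) MD.
have m0 X : m X X = 0.
  apply: (Halt ne); rewrite /upd eqxx eq_sym (negbTE ne) eqxx //.
have := m0 (w i + w j); rewrite mD1 !mD2 !m0 add0r addr0 => /eqP.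
rewrite addr_eq0 => /eqP H.
have -> : a w = m (w i) (w j).
  by rewrite /m upd_id upd_id.
have -> : (fun k => w (tperm i j k)) = upd (upd w j (w i)) i (w j).
  apply: functional_extensionality => l; rewrite /upd.
  case: (tpermP i j l) => [->|->|/eqP li /eqP lj]; rewrite ?eqxx //.
    by rewrite eq_sym (negbTE ne).
  by rewrite (negbTE li) (negbTE lj).
by rewrite H opprK.
Qed.

Lemma Mperm w (s : 'S_p) : a (fun k => w (s k)) = (-1) ^+ s * a w.
Proof.
have [ts -> dts] := prod_tpermP s.
elim: ts dts w => [|t ts IH] /= dts w.
  rewrite big_nil odd_perm1 expr0 mul1r; congr a.
  by apply: functional_extensionality => k; rewrite perm1.
move/andP: dts => [dt dts].
rewrite big_cons odd_permM odd_tperm dt.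
have -> : (fun k => w ((tperm t.1 t.2 * \prod_(t0 <- ts) tperm t0.1 t0.2)%g k))
   = (fun k => (fun l => w ((\prod_(t0 <- ts) tperm t0.1 t0.2)%g l)) (tperm t.1 t.2 k)).
  by apply: functional_extensionality => k; rewrite permM.
rewrite (Mswap (fun l => w ((\prod_(t0 <- ts) tperm t0.1 t0.2)%g l))) // IH //.
by case: (odd_perm _); rewrite /= ?expr0 ?expr1 ?mulN1r ?mul1r ?opprK.
Qed.


Section Expand.
Variables (v : 'I_n -> 'cV[F]_n) (c : 'I_n -> 'I_p -> F) (u : 'I_p -> 'cV[F]_n).
Hypothesis Hu : forall k, u k = \sum_j c j k *: v j.

Definition TT (J : {ffun 'I_p -> 'I_n}) :=
  (\prod_k cstn (c (J k) k)) * a (fun k => v (J k)).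

Section WithJ1.
Variable J1 : {ffun 'I_p -> 'I_n}.
Definition Pm m (J : {ffun 'I_p -> 'I_n}) := [forall k : 'I_p, (m <= k)%N ==> (J k == J1 k)].
Definition Wm m (J : {ffun 'I_p -> 'I_n}) := \prod_(k : 'I_p | (k < m)%N) cstn (c (J k) k).
Definition wm m (J : {ffun 'I_p -> 'I_n}) := fun k : 'I_p => if (k < m)%N then v (J k) else u k.

Lemma expand_m m : (m <= p)%N -> a u = \sum_(J | Pm m J) Wm m J * a (wm m J).
Proof.
elim: m => [_|m IH Hm].
  rewrite (eq_bigl (fun J => J == J1)); last first.
    move=> J; apply/forallP/eqP => [H|->]; last by move=> k; rewrite eqxx.
    by apply/ffunP => k; have := H k; rewrite leq0n => /eqP.
  rewrite big_pred1_eq /Wm big_pred0 // mul1r; congr a.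
have Hm' : (m < p)%N by [].
pose km : 'I_p := Ordinal Hm'.
rewrite (IH (ltnW Hm)); symmetry.
pose h (x : {ffun 'I_p -> 'I_n} * 'I_n) : {ffun 'I_p -> 'I_n} :=
  [ffun k => if k == km then x.2 else x.1 k].
pose h' (J : {ffun 'I_p -> 'I_n}) :=
  ([ffun k => if k == km then J1 k else J k], J km).
rewrite (reindex_onto h h'); last first.
  by move=> J _; apply/ffunP => k; rewrite !ffunE; case: eqP => // ->.
rewrite (eq_bigl (fun x => Pm m x.1 && true)); last first.
  case=> J j /=; rewrite andbT /Pm.
  apply/andP/forallP => [[/forallP H1 /eqP H2] k|H].
    apply/implyP => mk; case: (eqVneq k km) => [->|ne].
      have := congr1 (fun J0 : {ffun 'I_p -> 'I_n} => J0 km) (congr1 fst H2).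
      by rewrite /= !ffunE eqxx => ->.
    have mk' : (m.+1 <= k)%N.
      rewrite ltn_neqAle mk andbT; apply: contra ne => /eqP e.
      by apply/eqP/val_inj.
    by have := implyP (H1 k) mk'; rewrite ffunE (negbTE ne).
  split; first (apply/forallP => k; apply/implyP => mk).
    have mk' : (m <= k)%N by apply: ltnW.
    have ne : k != km by apply/eqP => ek; move: mk; rewrite ek /= ltnn.
    by rewrite ffunE (negbTE ne); exact: (implyP (H k) mk').
  apply/eqP; congr (_, _); last by rewrite ffunE eqxx.
  apply/ffunP => k; rewrite !ffunE; case: (eqVneq k km) => [->|//].
  by apply/esym/eqP; exact: (implyP (H km) (leqnn m)).
transitivity (\sum_(J | Pm m J) \sum_(j | true) Wm m.+1 (h (J, j)) * a (wm m.+1 (h (J, j)))).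
  by rewrite pair_big_dep /=; apply: eq_big => // -[J j].
apply: eq_bigr => J _; symmetry.
have -> : a (wm m J) = a (upd (wm m J) km (\sum_j c j km *: v j)).
  rewrite -Hu; congr a; apply: functional_extensionality => k; rewrite /upd /wm.
  by case: eqP => // ->; rewrite ltnn.
rewrite Msum mulr_sumr; apply: eq_bigr => j _.
rewrite mulrA; symmetry; congr (_ * _).
  rewrite /Wm (bigD1 km) //= ffunE eqxx mulrC; congr (_ * _).
  apply: eq_big => k.
    rewrite ltnS; case: (eqVneq k km) => [->|ne]; first by rewrite ltnn leqnn.
    have nm : (k : nat) != m by apply: contra ne => /eqP e; apply/eqP/val_inj.
    by rewrite andbT ltn_neqAle nm.
  by move=> /andP [_ ne]; rewrite ffunE (negbTE ne).
congr a; apply: functional_extensionality => k; rewrite /upd /wm ffunE.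
case: (eqVneq k km) => [->|ne]; first by rewrite ltnSn.
rewrite ltnS leq_eqVlt; have -> : (k == m :> nat) = false.
  by apply/negbTE; apply: contra ne => /eqP e; apply/eqP/val_inj.
by [].
Qed.
End WithJ1.

Lemma expand_full : a u = \sum_J TT J.
Proof.
case: (pickP (fun _ : {ffun 'I_p -> 'I_n} => true)) => [J1 _ | none].
  rewrite (expand_m J1 (leqnn p)); apply: eq_big => [J|J _].
    by apply/forallP => k; rewrite leqNgt ltn_ord.
  rewrite /TT /Wm; congr (_ * _); first by apply: eq_bigl => k; exact: ltn_ord.
  by congr a; apply: functional_extensionality => k; rewrite /wm ltn_ord.
rewrite big_pred0 //.
case: (pickP (fun _ : 'I_p => true)) => [k0 _ | nop]; last first.
  have := none [ffun k : 'I_p => False_rect 'I_n (Bool.diff_true_false (nop k))].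
  by [].
case: (pickP (fun _ : 'I_n => true)) => [j0 _ | nn].
  by have := none [ffun _ : 'I_p => j0].
have u0 : u k0 = 0 by rewrite Hu big_pred0.
by rewrite -(upd_id u k0) u0 M0.
Qed.

Lemma final_identity :
  \sum_(J0 : {ffun 'I_p -> 'I_n} | incr J0) \sum_(s : 'S_p)
     (-1) ^+ s * (\prod_k cstn (c (J0 k) (s k))) * a (fun k => v (J0 k)) = a u.
Proof.
rewrite expand_full.
transitivity (\sum_(J0 : {ffun 'I_p -> 'I_n} | incr J0) \sum_(s : 'S_p) TT (comp J0 s)).
  apply: eq_bigr => J0 _; rewrite [RHS](reindex_inj invg_inj); apply: eq_bigr => s _.
  rewrite /TT.
  have -> : (fun k => v (comp J0 (s^-1)%g k)) = (fun k => (fun l => v (J0 l)) ((s^-1)%g k)).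
    by apply: functional_extensionality => k; rewrite ffunE.
  rewrite (Mperm (fun l => v (J0 l))) odd_permV.
  rewrite [X in _ = X * _](reindex_inj (@perm_inj _ s)).
  rewrite [X in _ = X * _](eq_bigr (fun k => cstn (c (J0 k) (s k)))); last first.
    by move=> k _; rewrite ffunE permK.
  by rewrite mulrCA mulrA.
rewrite (eq_bigr (fun J0 => \sum_(J : {ffun 'I_p -> 'I_n} | injectiveb J && (srt J == J0)) TT J)); last first.
  by move=> J0 iJ; apply: sum_orbit.
rewrite -(partition_big (@srt p) (@incr n p)); last by move=> J; apply: srt_incr.
rewrite big_mkcond /=; apply: eq_bigr => J _; case: ifP => // /negbT.
move=> /injectivePn [i [j ne e]].
by rewrite /TT (Halt (u := fun k => v (J k)) ne) ?mulr0 //= e.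
Qed.

End Expand.

End Multi.




End Poly.

Theorem proposition5p3 (F : numClosedFieldType) (n : nat) (gT : finGroupType)
  (rG : mx_representation F [set: gT] n)
  (B : gT -> 'M[F]_n) (e : gT -> 'I_n -> F)
  (HB : forall g, B g \in unitmx)
  (He : forall g (i : 'I_n), rG g *m col i (B g) = e g i *: col i (B g))
  (p : nat) (alpha : ('I_p -> 'cV[F]_n) -> gT -> MP F n)
  (Hml : multilinear alpha) (Halt : alternating alpha) :
  forall (u : 'I_p -> 'cV[F]_n) (g : gT),
    PhiStar (Upsilon B e alpha) u g = alpha u g.
Proof.
move=> u g.
pose c (j : 'I_n) (l : 'I_p) := (invmx (B g) *m u l) j 0.
pose v (j : 'I_n) := col j (B g).
have Hu : forall k, u k = \sum_j c j k *: v j.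
  by move=> k; rewrite -mulmx_colsum mulKVmx.
rewrite -(@final_identity F n p (fun w => alpha w g)
   (fun k w x y c0 => Hml k w x y c0 g) (fun w i j ne e0 => Halt w i j ne e0 g) v c u Hu).
rewrite /PhiStar /Upsilon exchange_big /=.
apply: eq_bigr => s _; rewrite mulr_sumr; apply: eq_bigr => J _.
rewrite mulrA; congr (_ * _ * _); apply: eq_bigr => k _.
by rewrite partialB_embV // spre_cst.
Qed.
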